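(* Let $G$ be a connected simple cubic graph such that $S_{16}$ admits a $G$-coloring. Then $G$ is isomorphic to $S_{16}$.
   Context: A simple graph has no loops and no parallel edges; a cubic graph is $3$-regular. For a graph $X$ and vertex $x$, $\partial_X(x)$ denotes the set of edges of $X$ incident to $x$. For cubic graphs $G, H$ (loopless, parallel edges allowed), an $H$-coloring of $G$ is a map $f: E(G)\to E(H)$ such that for every vertex $x$ of $G$ there is a vertex $y$ of $H$ with $f(\partial_G(x))=\partial_H(y)$. $S_{16}$ is the simple cubic graph on $16$ vertices defined as follows: it has a central vertex $c$, and for each $i\in\{1,2,3\}$ vertices $v_1^i,\dots,v_5^i$ with edges $v_1^iv_2^i, v_1^iv_3^i, v_1^iv_4^i, v_2^iv_3^i, v_2^iv_4^i, v_3^iv_5^i, v_4^iv_5^i$ and the edge $v_5^ic$ (so $S_{16}$ has $24$ edges, three of which, $v_5^ic$, are bridges). *)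

(* Defs.v *)
From mathcomp Require Import all_boot.
Set Implicit Arguments. Unset Strict Implicit. Unset Printing Implicit Defensive.

(* A finite simple graph: vertex type T and a symmetric irreflexive relation e.
   Edges are represented as the 2-element vertex sets {x, y} with e x y. *)
Definition edges (T : finType) (e : rel T) : {set {set T}} :=
  [set E : {set T} | [exists x, exists y, e x y && (E == [set x; y])]].

Definition bd (T : finType) (e : rel T) (x : T) : {set {set T}} :=
  [set E in edges e | x \in E].

Definition simple_graph (T : finType) (e : rel T) : Prop :=
  symmetric e /\ irreflexive e.

Definition cubic (T : finType) (e : rel T) : Prop :=
  forall x : T, #|[set y | e x y]| = 3.

Definition connected_graph (T : finType) (e : rel T) : Prop :=
  forall x y : T, connect e x y.

(* An H-coloring of G: a map f : E(G) -> E(H) (given as a function on vertex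
   sets, constrained only on edges) such that every vertex star maps onto a
   vertex star. *)
Definition H_coloring (T1 T2 : finType) (e1 : rel T1) (e2 : rel T2)
    (f : {set T1} -> {set T2}) : Prop :=
  (forall E, E \in edges e1 -> f E \in edges e2) /\
  (forall x : T1, exists y : T2, f @: bd e1 x = bd e2 y).

(* The graph S_16: vertex None is the centre c, Some (i, k) is v_{k+1}^{i+1}. *)
Definition S16V : finType := option ('I_3 * 'I_5).

Definition gadget_edge (a b : nat) : bool :=
  (a, b) \in [:: (0, 1); (0, 2); (0, 3); (1, 2); (1, 3); (2, 4); (3, 4)].

Definition S16_adj : rel S16V := fun u v =>
  match u, v with
  | Some (i, a), Some (j, b) =>
      (i == j) && (gadget_edge a b || gadget_edge b a)
  | Some (_, a), None => val a == 4
  | None, Some (_, b) => val b == 4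
  | None, None => false
  end.

(* Main.v *)
Require Import Defs.
From mathcomp Require Import all_boot.
Set Implicit Arguments. Unset Strict Implicit. Unset Printing Implicit Defensive.

Section Gen.
Variables (T : finType) (e : rel T).
Hypotheses (Hs : symmetric e) (Hi : irreflexive e).

Lemma edge2 x y : e x y -> [set x; y] \in edges e.
Proof. by move=> exy; rewrite inE; apply/existsP; exists x; apply/existsP; exists y; rewrite exy eqxx. Qed.

Lemma edge_at E u : E \in edges e -> u \in E -> exists z, e u z /\ E = [set u; z].
Proof.
rewrite inE => /existsP [p /existsP [q /andP [epq /eqP ->]]].
rewrite !inE => /orP [/eqP ->|/eqP ->]; first by exists q.
by exists p; rewrite Hs setUC.
Qed.

Lemma bd_eq x : bd e x = [set [set x; z] | z in [set z | e x z]].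
Proof.
apply/setP => E; rewrite inE; apply/andP/imsetP.
- case=> HE Hx; have [z [exz ->]] := edge_at HE Hx.
  by exists z; rewrite ?inE.
- case=> z; rewrite inE => exz ->; split; first exact: edge2.
  by rewrite !inE eqxx.
Qed.

Lemma in_bd E x : (E \in bd e x) = (E \in edges e) && (x \in E).
Proof. by rewrite inE. Qed.

Lemma bd_card x : cubic e -> #|bd e x| = 3.
Proof.
move=> Hc; rewrite bd_eq card_in_imset ?Hc // => a b; rewrite !inE => exa exb /setP H.
have := H a; rewrite !inE eqxx orbT => /esym/orP [/eqP ax|/eqP //].
by move: exa; rewrite -ax Hi.
Qed.

Lemma edge_ends E a b : E \in edges e -> a \in E -> b \in E -> a != b -> e a b.
Proof.
move=> HE Ha; have [z [eaz ->]] := edge_at HE Ha.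
rewrite !inE => /orP [/eqP ->|/eqP ->]; first by rewrite eqxx.
by [].
Qed.

Lemma clos_conn (Z : {set T}) x y :
  (forall a b, a \in Z -> e a b -> b \in Z) -> x \in Z -> connect e x y -> y \in Z.
Proof.
move=> HZ xZ /connectP [p Hp ->]; elim: p x xZ Hp => //= a p IH x xZ /andP [exa Hp].
exact: (IH a (HZ x a xZ exa) Hp).
Qed.

End Gen.

Lemma card3_le (T : finType) (a b c : T) (X : {set T}) :
  [set a; b; c] \subset X -> #|X| <= 2 -> #|[set a; b; c]| = 3 -> False.
Proof.
move=> sub HX H; have := subset_leq_card sub; rewrite H => /leq_trans /(_ HX).
by [].
Qed.

Lemma count3 (T : finType) (a b c x : T) : #|[set a; b; c]| = 3 ->
  (x == a) + (x == b) + (x == c) = (x \in [set a; b; c]).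
Proof.
move=> H.
have ab : a != b.
  apply/eqP => ab; subst b; apply: (@card3_le _ a a c [set a; c]) => //; last by rewrite cards2; case: (_ != _).
  by apply/subsetP => z; rewrite !inE => /orP [/orP [] |] /eqP ->; rewrite ?eqxx ?orbT.
have ac : a != c.
  apply/eqP => ac; subst c; apply: (@card3_le _ a b a [set a; b]) => //; last by rewrite cards2; case: (_ != _).
  by apply/subsetP => z; rewrite !inE => /orP [/orP [] |] /eqP ->; rewrite ?eqxx ?orbT.
have bc : b != c.
  apply/eqP => bc; subst c; apply: (@card3_le _ a b b [set a; b]) => //; last by rewrite cards2; case: (_ != _).
  by apply/subsetP => z; rewrite !inE => /orP [/orP [] |] /eqP ->; rewrite ?eqxx ?orbT.
rewrite !inE.
case: (x =P a) => [->|xa]; first by rewrite (negbTE ab) (negbTE ac).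
case: (x =P b) => [->|xb]; first by rewrite (negbTE bc).
by case: (x =P c).
Qed.

Lemma card3_neq (T : finType) (a b c : T) : #|[set a; b; c]| = 3 ->
  [/\ a != b, a != c & b != c].
Proof.
move=> H; split.
- apply/eqP => ab; subst b; apply: (@card3_le _ a a c [set a; c]) => //; last by rewrite cards2; case: (_ != _).
  by apply/subsetP => z; rewrite !inE => /orP [/orP [] |] /eqP ->; rewrite ?eqxx ?orbT.
- apply/eqP => ac; subst c; apply: (@card3_le _ a b a [set a; b]) => //; last by rewrite cards2; case: (_ != _).
  by apply/subsetP => z; rewrite !inE => /orP [/orP [] |] /eqP ->; rewrite ?eqxx ?orbT.
- apply/eqP => bc; subst c; apply: (@card3_le _ a b b [set a; b]) => //; last by rewrite cards2; case: (_ != _).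
  by apply/subsetP => z; rewrite !inE => /orP [/orP [] |] /eqP ->; rewrite ?eqxx ?orbT.
Qed.


Lemma star3 (T1 T2 : finType) (e1 : rel T1) (e2 : rel T2) (f : {set T1} -> {set T2})
  x y z1 z2 z3 : symmetric e1 -> e1 x z1 -> e1 x z2 -> e1 x z3 ->
  (forall z, e1 x z -> z = z1 \/ z = z2 \/ z = z3) ->
  f @: bd e1 x = bd e2 y ->
  bd e2 y = [set f [set x; z1]; f [set x; z2]; f [set x; z3]].
Proof.
move=> Hs ez1 ez2 ez3 Hn <-; rewrite bd_eq //; apply/setP => E; apply/imsetP/idP.
- case=> F /imsetP [z]; rewrite inE => exz -> ->.
  by case: (Hn z exz) => [->|[->|->]]; rewrite !inE eqxx ?orbT.
- rewrite !inE => /orP [/orP [] |] /eqP ->.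
  + by exists [set x; z1] => //; apply/imsetP; exists z1; rewrite ?inE.
  + by exists [set x; z2] => //; apply/imsetP; exists z2; rewrite ?inE.
  + by exists [set x; z3] => //; apply/imsetP; exists z3; rewrite ?inE.
Qed.

Lemma vert_eq (T1 T2 : finType) (e1 : rel T1) (e2 : rel T2) (f : {set T1} -> {set T2})
  x y z1 z2 z3 u v : symmetric e1 -> symmetric e2 -> irreflexive e2 -> cubic e2 ->
  e1 x z1 -> e1 x z2 -> e1 x z3 ->
  (forall z, e1 x z -> z = z1 \/ z = z2 \/ z = z3) ->
  f @: bd e1 x = bd e2 y -> e2 u v ->
  (y == u) + (y == v) = (f [set x; z1] == [set u; v]) + (f [set x; z2] == [set u; v])
     + (f [set x; z3] == [set u; v]).
Proof.
move=> Hs1 Hs2 Hi2 Hc2 ez1 ez2 ez3 Hn Hf euv.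
have B := star3 Hs1 ez1 ez2 ez3 Hn Hf.
have C := bd_card Hs2 Hi2 y Hc2; rewrite B in C.
rewrite ![f _ == _]eq_sym count3 // -B in_bd edge2 //= !inE.
have uv : u != v by apply: contraTneq euv => ->; rewrite Hi2.
by case: (y =P u) => [->|]; rewrite ?(negbTE uv).
Qed.

Definition o0 : 'I_5 := @Ordinal 5 0 isT.
Definition o1 : 'I_5 := @Ordinal 5 1 isT.
Definition o2 : 'I_5 := @Ordinal 5 2 isT.
Definition o3 : 'I_5 := @Ordinal 5 3 isT.
Definition o4 : 'I_5 := @Ordinal 5 4 isT.
Definition p0 : 'I_3 := @Ordinal 3 0 isT.
Definition p1 : 'I_3 := @Ordinal 3 1 isT.
Definition p2 : 'I_3 := @Ordinal 3 2 isT.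

Lemma ord5_cases (b : 'I_5) : b = o0 \/ b = o1 \/ b = o2 \/ b = o3 \/ b = o4.
Proof.
case: b => [[|[|[|[|[|m]]]]] Hm].
- by left; apply/val_inj.
- by right; left; apply/val_inj.
- by right; right; left; apply/val_inj.
- by right; right; right; left; apply/val_inj.
- by right; right; right; right; apply/val_inj.
- by [].
Qed.

Lemma ord3_cases (b : 'I_3) : b = p0 \/ b = p1 \/ b = p2.
Proof.
case: b => [[|[|[|m]]] Hm].
- by left; apply/val_inj.
- by right; left; apply/val_inj.
- by right; right; apply/val_inj.
- by [].
Qed.

Lemma S16_sym : symmetric S16_adj.
Proof.
move=> [[i a]|] [[j b]|] //=; by rewrite eq_sym orbC.
Qed.

Lemma S16_irr : irreflexive S16_adj.
Proof.
move=> [[i a]|] //=; rewrite eqxx /=.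
by case: (ord5_cases a) => [->|[->|[->|[->|->]]]].
Qed.

Section Gad.
Variable i : 'I_3.
Notation V k := (Some (i, k)).

Lemma adj_in k l : S16_adj (V k) (V l) = gadget_edge k l || gadget_edge l k.
Proof. by rewrite /= eqxx. Qed.

Lemma n0 z : S16_adj (V o0) z -> z = V o1 \/ z = V o2 \/ z = V o3.
Proof. move: z => [[j b]|] //=; try tauto; case/andP => /eqP <-;
  case: (ord5_cases b) => [->|[->|[->|[->|->]]]] //= _; tauto. Qed.
Lemma n1 z : S16_adj (V o1) z -> z = V o0 \/ z = V o2 \/ z = V o3.
Proof. move: z => [[j b]|] //=; try tauto; case/andP => /eqP <-;
  case: (ord5_cases b) => [->|[->|[->|[->|->]]]] //= _; tauto. Qed.
Lemma n2 z : S16_adj (V o2) z -> z = V o0 \/ z = V o1 \/ z = V o4.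
Proof. move: z => [[j b]|] //=; try tauto; case/andP => /eqP <-;
  case: (ord5_cases b) => [->|[->|[->|[->|->]]]] //= _; tauto. Qed.
Lemma n3 z : S16_adj (V o3) z -> z = V o0 \/ z = V o1 \/ z = V o4.
Proof. move: z => [[j b]|] //=; try tauto; case/andP => /eqP <-;
  case: (ord5_cases b) => [->|[->|[->|[->|->]]]] //= _; tauto. Qed.
Lemma n4 z : S16_adj (V o4) z -> z = V o2 \/ z = V o3 \/ z = None.
Proof. move: z => [[j b]|] //=; try tauto; case/andP => /eqP <-;
  case: (ord5_cases b) => [->|[->|[->|[->|->]]]] //= _; tauto. Qed.
End Gad.

Lemma nN z : S16_adj None z -> z = Some (p0, o4) \/ z = Some (p1, o4) \/ z = Some (p2, o4).
Proof.
case: z => [[j b]|] //= /eqP Hb.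
have -> : b = o4 by apply/val_inj.
by case: (ord3_cases j) => [->|[->|->]]; tauto.
Qed.


Lemma sum5 (F : 'I_5 -> nat) : \sum_(k < 5) F k = F o0 + F o1 + F o2 + F o3 + F o4.
Proof.
rewrite !big_ord_recl big_ord0 addn0 !addnA.
have -> : lift ord0 ord0 = o1 :> 'I_5 by apply/val_inj.
have -> : lift ord0 (lift ord0 ord0) = o2 :> 'I_5 by apply/val_inj.
have -> : lift ord0 (lift ord0 (lift ord0 ord0)) = o3 :> 'I_5 by apply/val_inj.
have -> : lift ord0 (lift ord0 (lift ord0 (lift ord0 ord0))) = o4 :> 'I_5 by apply/val_inj.
have -> : ord0 = o0 :> 'I_5 by apply/val_inj.
by [].
Qed.

Section Main.
Variables (T : finType) (e : rel T) (f : {set S16V} -> {set T}) (g : S16V -> T).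
Hypotheses (Hs : symmetric e) (Hi : irreflexive e) (Hc : cubic e)
  (Hconn : connected_graph e)
  (Hedge : forall E, E \in edges S16_adj -> f E \in edges e)
  (Hg : forall x, f @: bd S16_adj x = bd e (g x)).

Definition n (i : 'I_3) (y : T) := \sum_(k < 5) (g (Some (i, k)) == y).
Definition beta (i : 'I_3) := f [set Some (i, o4); None].

Lemma cobound i u v : e u v -> odd (n i u + n i v) = (beta i == [set u; v]).
Proof.
move=> euv; rewrite /n -big_split /= sum5.
have a01 : S16_adj (Some (i, o0)) (Some (i, o1)) by rewrite /= eqxx.
have a02 : S16_adj (Some (i, o0)) (Some (i, o2)) by rewrite /= eqxx.
have a03 : S16_adj (Some (i, o0)) (Some (i, o3)) by rewrite /= eqxx.
have a12 : S16_adj (Some (i, o1)) (Some (i, o2)) by rewrite /= eqxx.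
have a13 : S16_adj (Some (i, o1)) (Some (i, o3)) by rewrite /= eqxx.
have a24 : S16_adj (Some (i, o2)) (Some (i, o4)) by rewrite /= eqxx.
have a34 : S16_adj (Some (i, o3)) (Some (i, o4)) by rewrite /= eqxx.
have a4N : S16_adj (Some (i, o4)) None by [].
have sy := S16_sym.
rewrite (vert_eq sy Hs Hi Hc a01 a02 a03 (@n0 i) (Hg _) euv).
have a10 : S16_adj (Some (i, o1)) (Some (i, o0)) by rewrite sy.
have a20 : S16_adj (Some (i, o2)) (Some (i, o0)) by rewrite sy.
have a21 : S16_adj (Some (i, o2)) (Some (i, o1)) by rewrite sy.
have a30 : S16_adj (Some (i, o3)) (Some (i, o0)) by rewrite sy.
have a31 : S16_adj (Some (i, o3)) (Some (i, o1)) by rewrite sy.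
have a42 : S16_adj (Some (i, o4)) (Some (i, o2)) by rewrite sy.
have a43 : S16_adj (Some (i, o4)) (Some (i, o3)) by rewrite sy.
rewrite (vert_eq sy Hs Hi Hc a10 a12 a13 (@n1 i) (Hg _) euv).
rewrite (vert_eq sy Hs Hi Hc a20 a21 a24 (@n2 i) (Hg _) euv).
rewrite (vert_eq sy Hs Hi Hc a30 a31 a34 (@n3 i) (Hg _) euv).
rewrite (vert_eq sy Hs Hi Hc a42 a43 a4N (@n4 i) (Hg _) euv).
rewrite ![[set Some (i, o1); Some (i, o0)]]setUC ![[set Some (i, o2); Some (i, o0)]]setUC.
rewrite ![[set Some (i, o2); Some (i, o1)]]setUC ![[set Some (i, o3); Some (i, o0)]]setUC.
rewrite ![[set Some (i, o3); Some (i, o1)]]setUC ![[set Some (i, o4); Some (i, o2)]]setUC.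
rewrite ![[set Some (i, o4); Some (i, o3)]]setUC /beta.
rewrite !oddD !oddb.
by do 8! case: (f _ == _).
Qed.

Lemma sum_eq1 (a : T) : \sum_(y : T) (a == y) = 1.
Proof. by rewrite (bigD1 a) //= eqxx big1 // => y; rewrite eq_sym => /negbTE ->. Qed.

Lemma sum_eq1r (a : T) : \sum_(y : T) (y == a) = 1.
Proof. by rewrite (bigD1 a) //= eqxx big1 // => y /negbTE ->. Qed.

Lemma sum_n i : \sum_(y : T) n i y = 5.
Proof.
rewrite /n exchange_big /=.
by rewrite (eq_bigr (fun _ => 1)) ?sum_nat_const ?card_ord // => k _; rewrite sum_eq1.
Qed.

Lemma n_pos i k : 0 < n i (g (Some (i, k))).
Proof. by rewrite /n (bigD1 k) //= eqxx. Qed.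

Lemma n_two i k k' : k != k' -> g (Some (i, k)) = g (Some (i, k')) ->
  2 <= n i (g (Some (i, k))).
Proof.
move=> kk' Hg'; rewrite /n (bigD1 k) //= (bigD1 k') /=; last by rewrite eq_sym.
by rewrite eqxx Hg' eqxx.
Qed.

Lemma n_image i y : 0 < n i y -> exists k, g (Some (i, k)) = y.
Proof.
move=> Hp; case: (pickP (fun k => g (Some (i, k)) == y)) => [k /eqP Hk|Hn]; first by exists k.
by move: Hp; rewrite /n big1 // => k _; rewrite Hn.
Qed.

Lemma maxone i y' : 4 <= #|[set y | odd (n i y)]| -> n i y' <= 1.
Proof.
move=> H4; rewrite leqNgt; apply/negP => H2.
set A := [set y | odd (n i y)].
have: \sum_(y : T) ((y \in A) + 2 * (y == y')) <= \sum_(y : T) n i y.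
  apply: leq_sum => y _; rewrite inE; case: (y =P y') => [->|_].
  - case Ho: (odd (n i y')) => /=; last by rewrite muln1.
    by move: H2 Ho; case: (n i y') => [|[|[|m]]].
  - rewrite muln0 addn0; case Ho: (odd (n i y)) => //; exact: odd_gt0.
rewrite sum_n big_split /= -big_distrr /=.
rewrite sum_eq1r.
have -> : \sum_(y : T) (y \in A) = #|A|.
  by rewrite -sum1_card [RHS]big_mkcond /=; apply: eq_bigr => y _; case: (y \in A).
rewrite muln1 => H5; by have := leq_trans (leq_add H4 (leqnn 2)) H5.
Qed.

End Main.


Section Cut.
Variables (T : finType) (e : rel T).
Hypotheses (Hs : symmetric e) (Hi : irreflexive e) (Hc : cubic e)
  (Hconn : connected_graph e).

Definition cut (S : {set T}) y w :=
  forall u v, e u v -> (u \in S) (+) (v \in S) = ([set u; v] == [set y; w]).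

Lemma pair_false (a b y w : T) : a != y -> a != w -> ([set a; b] == [set y; w]) = false.
Proof.
move=> ay aw; apply/negbTE/negP => /eqP H.
have : a \in [set y; w] by rewrite -H !inE eqxx.
by rewrite !inE (negbTE ay) (negbTE aw).
Qed.

Lemma cutC (S : {set T}) y w : cut S y w -> cut (~: S) y w.
Proof. by move=> H u v euv; rewrite !inE addbN addNb negbK H. Qed.

Lemma side (S : {set T}) y w : e y w -> y \notin S -> cut S y w -> w \in S /\ 4 <= #|S|.
Proof.
move=> eyw yS H.
have wS : w \in S by have := H y w eyw; rewrite eqxx (negbTE yS) addFb.
split => //.
have wy : w != y by apply: contraTneq eyw => ->; rewrite Hi.
have : 0 < #|[set z | e w z] :\ y|.
  have := cardsD1 y [set z | e w z]; rewrite Hc inE Hs eyw.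
  by rewrite add1n => -[<-].
rewrite card_gt0 => /set0Pn [a]; rewrite !inE => /andP [ay ewa].
have aw : a != w by apply: contraTneq ewa => ->; rewrite Hi.
have aS : a \in S.
  by have := H w a ewa; rewrite wS setUC (pair_false _ ay aw) addTb => /negbFE.
have NS : [set z | e a z] \subset S.
  apply/subsetP => z; rewrite inE => eaz.
  by have := H a z eaz; rewrite aS (pair_false _ ay aw) addTb => /negbFE.
have : a |: [set z | e a z] \subset S by rewrite subUset sub1set aS NS.
move/subset_leq_card; rewrite cardsU1 Hc inE Hi.
by [].
Qed.

Lemma disj (S1 S2 : {set T}) y w1 w2 : e y w1 -> e y w2 -> w1 != w2 ->
  y \notin S1 -> y \notin S2 -> cut S1 y w1 -> cut S2 y w2 ->
  forall z, z \in S1 -> z \in S2 -> False.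
Proof.
move=> e1 e2 w12 y1 y2 H1 H2 z z1 z2.
have w1y : w1 != y by apply: contraTneq e1 => ->; rewrite Hi.
have w2y : w2 != y by apply: contraTneq e2 => ->; rewrite Hi.
have w1S2 : w1 \notin S2.
  by have := H2 y w1 e1; rewrite (negbTE y2) addFb setUC (pair_false _ w1y w12) => ->.
have w21 : w2 != w1 by rewrite eq_sym.
have w2S1 : w2 \notin S1.
  by have := H1 y w2 e2; rewrite (negbTE y1) addFb setUC (pair_false _ w2y w21) => ->.
have cl : forall a b, a \in S1 :&: S2 -> e a b -> b \in S1 :&: S2.
  move=> a b; rewrite inE => /andP [a1 a2] eab.
  have ay : a != y by apply: contraTneq a1 => ->.
  have aw1 : a != w1 by apply: contraTneq a2 => ->.
  have aw2 : a != w2 by apply: contraTneq a1 => ->.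
  rewrite inE; apply/andP; split.
    by have := H1 a b eab; rewrite a1 (pair_false _ ay aw1) addTb => /negbFE.
  by have := H2 a b eab; rewrite a2 (pair_false _ ay aw2) addTb => /negbFE.
have zZ : z \in S1 :&: S2 by rewrite inE z1 z2.
by have := clos_conn cl zZ (Hconn z y); rewrite inE (negbTE y1).
Qed.
End Cut.


Section Final.
Variables (T : finType) (e : rel T) (f : {set S16V} -> {set T}) (g : S16V -> T).
Hypotheses (Hs : symmetric e) (Hi : irreflexive e) (Hc : cubic e)
  (Hconn : connected_graph e)
  (Hg : forall x, f @: bd S16_adj x = bd e (g x)).

Lemma gE E u : E \in bd S16_adj u -> g u \in f E.
Proof.
move=> HE; have : f E \in bd e (g u) by rewrite -Hg; apply: imset_f.
by rewrite in_bd => /andP [].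
Qed.

Let y0 := g None.

Lemma bN : bd e y0 = [set f [set None; Some (p0, o4)]; f [set None; Some (p1, o4)];
                        f [set None; Some (p2, o4)]].
Proof. exact: (star3 S16_sym (isT : S16_adj None (Some (p0, o4))) (isT : S16_adj None (Some (p1, o4))) (isT : S16_adj None (Some (p2, o4))) nN (Hg None)). Qed.

Lemma beta_in i : beta f i \in bd e y0.
Proof.
rewrite /beta setUC bN; case: (ord3_cases i) => [->|[->|->]]; by rewrite !inE eqxx ?orbT.
Qed.

Lemma beta_neq i j : i != j -> beta f i != beta f j.
Proof.
have := bd_card Hs Hi y0 Hc; rewrite bN => /card3_neq [h01 h02 h12].
rewrite /beta ![[set Some (_, o4); None]]setUC.
case: (ord3_cases i) => [->|[->|->]]; case: (ord3_cases j) => [->|[->|->]] //; rewrite ?eqxx // => _;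
  by rewrite // eq_sym.
Qed.

Lemma exw i : exists w, e y0 w /\ beta f i = [set y0; w].
Proof.
have := beta_in i; rewrite in_bd => /andP [HE Hy].
by have [z [ez ->]] := edge_at Hs HE Hy; exists z.
Qed.


Lemma g_props : injective g /\ (forall i k, g (Some (i, k)) != y0).
Proof.
have [w Hw] := fin_all_exists exw.
have wneq i j : i != j -> w i != w j.
  move=> ij; apply: contra (beta_neq ij) => /eqP wij.
  by rewrite (proj2 (Hw i)) (proj2 (Hw j)) wij.
pose A i := [set y | odd (n g i y)].
have cutA i : cut e (A i) y0 (w i).
  move=> u v euv; rewrite !inE -oddD (cobound Hs Hi Hc Hg i euv) (proj2 (Hw i)).
  by rewrite eq_sym.
pose S i := if y0 \in A i then ~: A i else A i.
have cutS i : cut e (S i) y0 (w i).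
  by rewrite /S; case: ifP => _; [apply: cutC|]; apply: cutA.
have yS i : y0 \notin S i.
  by rewrite /S; case: ifP => H; rewrite ?in_setC H.
have sideS i := side Hs Hi Hc (proj1 (Hw i)) (yS i) (cutS i).
have disjS i j z : i != j -> z \in S i -> z \in S j -> False.
  by move=> ij; apply: (disj Hi Hconn (proj1 (Hw i)) (proj1 (Hw j)) (wneq i j ij) (yS i) (yS j) (cutS i) (cutS j)).
have yA3 i j k : i != j -> i != k -> j != k -> y0 \notin A i.
  move=> ij ik jk; apply/negP => yA.
  have SA : S i = ~: A i by rewrite /S yA.
  have sub : y0 |: (S j :|: S k) \subset A i.
    apply/subsetP => z; rewrite in_setU1 in_setU => /orP [/eqP -> //|] Hz.
    apply/negPn/negP => zA.
    have zS : z \in S i by rewrite SA in_setC zA.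
    by case/orP: Hz => Hz; [apply: (disjS i j z ij) | apply: (disjS i k z ik)].
  have c1 : 9 <= #|y0 |: (S j :|: S k)|.
    rewrite cardsU1 in_setU (negbTE (yS j)) (negbTE (yS k)) /= cardsU.
    have -> : S j :&: S k = set0.
      by apply/setP => z; rewrite in_setI in_set0; apply/negP => /andP [z1 z2]; apply: (disjS j k z jk).
    rewrite cards0 subn0 add1n ltnS.
    exact: (leq_add (proj2 (sideS j)) (proj2 (sideS k))).
  have sub2 : A i \subset [set g (Some (i, l)) | l in 'I_5].
    apply/subsetP => z; rewrite inE => Hz.
    have [l Hk] := n_image (odd_gt0 Hz).
    by rewrite -Hk; apply: imset_f.
  have := leq_trans c1 (leq_trans (subset_leq_card sub) (leq_trans (subset_leq_card sub2) (leq_imset_card _ _))).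
  by rewrite card_ord.
have yA i : y0 \notin A i.
  case: (ord3_cases i) => [->|[->|->]].
  - exact: (yA3 p0 p1 p2).
  - exact: (yA3 p1 p0 p2).
  - exact: (yA3 p2 p0 p1).
have AS i : S i = A i by rewrite /S (negbTE (yA i)).
have n1 i y : n g i y <= 1.
  by apply: maxone; have := proj2 (sideS i); rewrite AS.
have gin i k : g (Some (i, k)) \in S i.
  rewrite AS inE; have := n_pos g i k; have := n1 i (g (Some (i, k))).
  by case: (n g i _) => [|[|m]].
have ginj i k k' : g (Some (i, k)) = g (Some (i, k')) -> k = k'.
  move=> H; apply/eqP; apply/negPn/negP => kk'.
  have := n_two kk' H; have := n1 i (g (Some (i, k))).
  by case: (n g i _) => [|[|m]].
split.
- move=> [[i k]|] [[j l]|] //= H.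
  + case: (i =P j) => [ij|/eqP ij].
      by subst j; rewrite (ginj _ _ _ H).
    by exfalso; apply: (disjS i j _ ij (gin i k)); rewrite H; apply: gin.
  + by exfalso; have := gin i k; rewrite H (negbTE (yS i)).
  + by exfalso; have := gin j l; rewrite -H (negbTE (yS j)).
- move=> i k; apply/negP => /eqP H.
  by have := gin i k; rewrite H (negbTE (yS i)).
Qed.

Lemma step x t : e (g x) t -> exists z, S16_adj x z /\ g z = t.
Proof.
move=> ext; have ginj := proj1 g_props.
have : [set g x; t] \in bd e (g x) by rewrite in_bd edge2 // !inE eqxx.
rewrite -Hg => /imsetP [E HE Ef].
have := HE; rewrite in_bd => /andP [HE' Hx].
have [z [axz EE]] := edge_at S16_sym HE' Hx.
have : g z \in f E by apply: gE; rewrite in_bd HE' EE !inE eqxx orbT.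
rewrite -Ef !inE => /orP [/eqP gzx | /eqP gzt].
  by move: axz; rewrite (ginj _ _ gzx) S16_irr.
by exists z.
Qed.

Lemma iso : exists phi : S16V -> T, bijective phi /\
    (forall u v : S16V, e (phi u) (phi v) = S16_adj u v).
Proof.
have ginj := proj1 g_props.
exists g; split.
  apply: inj_card_bij => //.
  have sub : [set: T] \subset [set g x | x in [set: S16V]].
    apply/subsetP => t _.
    pose Z := [set t | [exists x, g x == t]].
    have cl : forall a b, a \in Z -> e a b -> b \in Z.
      move=> a b; rewrite inE => /existsP [x /eqP <-] eab.
      have [z [_ gz]] := step eab.
      by rewrite inE; apply/existsP; exists z; rewrite gz.
    have y0Z : g None \in Z by rewrite inE; apply/existsP; exists None.
    have := clos_conn cl y0Z (Hconn (g None) t).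
    by rewrite inE => /existsP [x /eqP <-]; apply: imset_f; rewrite inE.
  rewrite -cardsT; apply: leq_trans (subset_leq_card sub) _.
  by rewrite (leq_trans (leq_imset_card _ _)) // cardsT.
move=> u v; apply/idP/idP.
  move=> euv; have [z [az gz]] := step euv.
  by rewrite -(ginj _ _ gz).
move=> auv.
have HE : [set u; v] \in edges S16_adj by apply: edge2.
have Hu : g u \in f [set u; v] by apply: gE; rewrite in_bd HE !inE eqxx.
have Hv : g v \in f [set u; v] by apply: gE; rewrite in_bd HE !inE eqxx orbT.
have Hf : f [set u; v] \in edges e.
  have : f [set u; v] \in bd e (g u) by rewrite -Hg; apply: imset_f; rewrite in_bd HE !inE eqxx.
  by rewrite in_bd => /andP [].
apply: (edge_ends Hs Hf Hu Hv).
apply/negP => /eqP /ginj uv; by move: auv; rewrite uv S16_irr.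
Qed.

End Final.


Theorem theorem3 (T : finType) (e : rel T)
  (Hsimple : simple_graph e) (Hcubic : cubic e) (Hconn : connected_graph e)
  (Hcol : exists f : {set S16V} -> {set T}, H_coloring S16_adj e f) :
  exists phi : S16V -> T, bijective phi /\
    (forall u v : S16V, e (phi u) (phi v) = S16_adj u v).
Proof.
case: Hsimple => Hs Hi.
case: Hcol => f [_ Hstar].
have [g Hg] := fin_all_exists Hstar.
exact: (iso Hs Hi Hcubic Hconn Hg).
Qed.
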